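(* For every graph $G=(V,E)$, $\rho_T(G)=\widehat{\Theta}(G)$.
   Context: Graphs are finite and simple. A graph $G=(V,E)$ is a threshold graph if there exist weights $w:V\to\mathbb{R}$ and a real number $s$ such that for all distinct $i,j\in V$: $w(i)+w(j)\ge s$ iff $ij\in E$. The threshold graph intersection number $\widehat{\Theta}(G)$ is the least $k\ge 1$ such that there exist threshold graphs $(V,E_1),\dots,(V,E_k)$ on the same vertex set with $E_1\cap\dots\cap E_k=E$. For $u,v\in(\mathbb{R}\cup\{\infty\})^k$ the min-plus tropical dot product is $u\odot v=\min_i(u_i+v_i)$. A min-plus $k$-tropical dot product representation of $G$ is a map $f:V\to(\mathbb{R}\cup\{\infty\})^k$ with a threshold $t>0$ such that for all distinct $x,y\in V$: $xy\in E$ iff $f(x)\odot f(y)\ge t$. $\rho_T(G)$ is the least $k\ge 1$ for which such a representation exists. *)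

(* Defs.v *)
From HB Require Import structures.
From mathcomp Require Import all_boot all_order all_algebra.
From mathcomp Require Import reals.
Set Implicit Arguments. Unset Strict Implicit. Unset Printing Implicit Defensive.
Import Order.TTheory GRing.Theory Num.Theory.
Local Open Scope ring_scope.

Section Defs.
Variable R : realType.

Definition simple_graph (V : finType) (E : rel V) : Prop :=
  symmetric E /\ irreflexive E.

Definition threshold_graph (V : finType) (E : rel V) : Prop :=
  simple_graph E /\
  exists (w : V -> R) (s : R),
    forall i j : V, i != j -> (s <= w i + w j <-> E i j).

Definition threshold_intersection_rep (V : finType) (E : rel V) (k : nat) : Prop :=
  (1 <= k)%N /\
  exists Es : 'I_k -> rel V,
    (forall i, threshold_graph (Es i)) /\
    (forall x y : V, E x y = [forall i, Es i x y]).

(* R ∪ {∞}, encoded as option R with None = ∞. *)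
Definition extR := option R.
Definition ext_add (a b : extR) : extR :=
  match a, b with Some x, Some y => Some (x + y) | _, _ => None end.
Definition ext_min (a b : extR) : extR :=
  match a, b with
  | Some x, Some y => Some (Num.min x y)
  | None, b => b
  | a, None => a
  end.
Definition ext_ge (a : extR) (t : R) : bool :=
  match a with Some x => t <= x | None => true end.

Definition trop_dot (k : nat) (u v : 'I_k -> extR) : extR :=
  \big[ext_min/None]_(i < k) ext_add (u i) (v i).

Definition trop_rep (V : finType) (E : rel V) (k : nat) : Prop :=
  (1 <= k)%N /\
  exists (f : V -> 'I_k -> extR) (t : R),
    0 < t /\
    forall x y : V, x != y -> (E x y <-> ext_ge (trop_dot (f x) (f y)) t).

End Defs.

Definition least_nat (P : nat -> Prop) (n : nat) : Prop :=
  P n /\ forall m, P m -> (n <= m)%N.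

(* Main.v *)
Require Import Defs.
From HB Require Import structures.
From mathcomp Require Import all_boot all_order all_algebra.
From mathcomp Require Import reals.
From mathcomp Require Import lra.
From Stdlib Require Import Classical ClassicalEpsilon.
Set Implicit Arguments. Unset Strict Implicit. Unset Printing Implicit Defensive.
Import Order.TTheory GRing.Theory Num.Theory.
Local Open Scope ring_scope.

Section Aux.
Variable R : realType.

Lemma ext_ge_min (a b : extR R) t :
  ext_ge (ext_min a b) t = ext_ge a t && ext_ge b t.
Proof.
case: a => [x|]; case: b => [y|] //=; last by rewrite andbT.
by rewrite le_min.
Qed.

Lemma big_ext_ge (I : Type) (r : seq I) (P : pred I) (F : I -> extR R) t :
  ext_ge (\big[@ext_min R/None]_(i <- r | P i) F i) t =
  all (fun i => P i ==> ext_ge (F i) t) r.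
Proof.
elim: r => [|a r IH]; first by rewrite big_nil.
rewrite big_cons /=; case: (P a) => /=; last by rewrite IH.
by rewrite ext_ge_min IH.
Qed.

Lemma trop_dot_ge k (u v : 'I_k -> extR R) t :
  ext_ge (trop_dot u v) t <-> forall i, ext_ge (ext_add (u i) (v i)) t.
Proof.
rewrite /trop_dot big_ext_ge; split.
  by move=> /allP H i; apply: (H i); rewrite mem_index_enum.
by move=> H; apply/allP => i _; apply: H.
Qed.

Lemma ext_addC (a b : extR R) : ext_add a b = ext_add b a.
Proof. by case: a => [x|]; case: b => [y|] //=; rewrite addrC. Qed.

End Aux.

Section Dirs.
Variable R : realType.
Variables (V : finType) (E : rel V).
Hypothesis HE : simple_graph E.

Lemma trop_to_thr k : trop_rep R E k -> threshold_intersection_rep R E k.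
Proof.
case=> k1 [f [t [t0 Hf]]]; split => //.
exists (fun i x y => (x != y) && ext_ge (ext_add (f x i) (f y i)) t); split.
  move=> i; split.
    split; first by move=> x y; rewrite eq_sym ext_addC.
    by move=> x; rewrite eqxx.
  pose S := \sum_(x : V) `|odflt 0 (f x i)|.
  have S0 : 0 <= S by apply: sumr_ge0 => x _.
  have Sb : forall x, `|odflt 0 (f x i)| <= S.
    move=> x; rewrite /S (bigD1 x) //=; rewrite lerDl; exact: sumr_ge0.
  exists (fun x => odflt (t + S) (f x i)), t => x y nxy; rewrite nxy /=.
  have := Sb x; have := Sb y.
  case: (f x i) => [a|]; case: (f y i) => [b|] //= hb ha; split=> // _.
  - have : - a <= `|a| by rewrite -normrN ler_norm. lra.
  - have : - b <= `|b| by rewrite -normrN ler_norm. lra.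
  - lra.
move=> x y; case: (eqVneq x y) => [->|nxy].
  case: HE => _ ->; symmetry; apply/negP => /forallP /(_ (Ordinal k1)).
  by [].
apply/idP/idP.
  move=> /(Hf _ _ nxy) /trop_dot_ge H; apply/forallP => i /=.
  exact: H.
move=> /forallP H; apply/(Hf _ _ nxy); apply/trop_dot_ge => i.
exact: (H i).
Qed.

Lemma thr_to_trop k : threshold_intersection_rep R E k -> trop_rep R E k.
Proof.
case=> k1 [Es [Ht HEs]]; split => //.
have H : forall i, {ws : (V -> R) * R |
   forall a b, a != b -> (ws.2 <= ws.1 a + ws.1 b <-> Es i a b)}.
  move=> i; apply: constructive_indefinite_description.
  case: (Ht i) => _ [w [s Hws]]; by exists (w, s).
exists (fun x i => Some ((sval (H i)).1 x - (sval (H i)).2 / 2 + 1 / 2)), 1.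
split; first by [].
move=> x y nxy; rewrite HEs; split.
  move=> /forallP Hi; apply/trop_dot_ge => i /=.
  have := proj2 (svalP (H i) x y nxy) (Hi i).
  set w := (sval (H i)).1; set s := (sval (H i)).2 => hs. lra.
move=> /trop_dot_ge Hi; apply/forallP => i.
apply/(svalP (H i) x y nxy).
have := Hi i => /=.
set w := (sval (H i)).1; set s := (sval (H i)).2 => hs. lra.
Qed.

End Dirs.

Lemma least_ex (P : nat -> Prop) m : P m -> exists n, least_nat P n.
Proof.
move=> Pm; apply: NNPP => Hn.
suff: forall n j, (j <= n)%N -> ~ P j by move/(_ m m (leqnn m)).
elim=> [|n IH] j hj Pj; apply: Hn; exists j; split => // i Pi.
  by case: j hj {Pj}.
case: (leqP j i) => // lij; exfalso; apply: (IH i) => //.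
by rewrite -ltnS (leq_trans lij hj).
Qed.

Section Exist.
Variable R : realType.
Variables (V : finType) (E : rel V).
Hypothesis HE : simple_graph E.

Definition Gop (o : option (V * V)) (x y : V) : bool :=
  (x != y) && match o with None => true | Some p =>
    E p.1 p.2 || ~~(((x==p.1)||(x==p.2)) && ((y==p.1)||(y==p.2))) end.

Lemma Gop_thr o : threshold_graph R (Gop o).
Proof.
split.
  split.
    move=> x y; rewrite /Gop eq_sym; case: o => [[u v]|] //=.
    by rewrite [(_ || _) && (_ || _)]andbC.
  by move=> x; rewrite /Gop eqxx.
case: o => [[u v]|]; last by exists (fun _ => 0), 0 => a b nab; rewrite /Gop nab addr0.
case Euv: (E u v).
  by exists (fun _ => 0), 0 => a b nab; rewrite /Gop nab Euv addr0.
exists (fun z => if (z==u)||(z==v) then 0 else 1), 1 => a b nab.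
rewrite /Gop nab Euv /=.
case: ((a==u)||(a==v)); case: ((b==u)||(b==v)) => /=; rewrite ?addr0 ?add0r;
  split => //; lra.
Qed.

Lemma exists_thr : exists m, threshold_intersection_rep R E m.
Proof.
exists #|{: option (V * V)}|; split.
  by apply/card_gt0P; exists None.
exists (fun i => Gop (enum_val i)); split; first by move=> i; exact: Gop_thr.
move=> x y; case: (eqVneq x y) => [<-|nxy].
  case: HE => _ ->; symmetry; apply/negP => /forallP /(_ (enum_rank (None : option (V * V)))).
  by rewrite /Gop eqxx.
case Exy: (E x y).
  symmetry; apply/forallP => i; rewrite /Gop nxy /=.
  case: (enum_val i) => [[u v]|] //=.
  case Euv: (E u v) => //=; apply/negP.
  case: HE => Hs _.
  move=> /andP [/orP [] /eqP ex /orP [] /eqP ey]; subst.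
  all: try by rewrite eqxx in nxy.
  - by rewrite Exy in Euv.
  - by rewrite Hs Exy in Euv.
symmetry; apply/negP => /forallP /(_ (enum_rank (Some (x, y) : option (V * V)))).
rewrite enum_rankK /Gop nxy Exy /= !eqxx orbT /=; by [].
Qed.

End Exist.

Theorem mainTheorem8 (R : realType) (V : finType) (E : rel V) :
  simple_graph E ->
  exists n : nat,
    least_nat (threshold_intersection_rep R E) n /\
    least_nat (trop_rep R E) n.
Proof.
move=> HE; have [m Hm] := exists_thr R HE.
have [n [Pn Hn]] := least_ex Hm.
exists n; split; first by split.
split; first exact: thr_to_trop.
by move=> m' /(trop_to_thr HE) /Hn.
Qed.
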